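(* Let $n\geq 1$ and let $\varphi=\frac{1+\sqrt5}{2}$. If ${\bf f}[n]=a$, then $V(n)=\lceil n/\varphi^2\rceil$, equivalently $V(n)$ equals the number of occurrences of $b$ in ${\bf f}(0..n]$ plus one. If ${\bf f}[n]=b$, then $V(n)=\lceil n/\varphi^3\rceil$, equivalently $V(n)$ equals the number of occurrences of the factor $aa$ in ${\bf f}(0..n]$ plus one.
   Context: Fibonacci numbers: $F_0=0$, $F_1=1$, $F_{m+2}=F_{m+1}+F_m$. Standard Fibonacci words over $\{a,b\}$: $f_{-1}=b$, $f_0=a$, $f_{m+1}=f_mf_{m-1}$ for $m\geq 0$ (so $|f_m|=F_{m+2}$). The Fibonacci infinite word is ${\bf f}=\lim_{m\to\infty} f_m=abaababaab\cdots$, indexed from ${\bf f}[1]=a$; ${\bf f}(0..j]$ denotes its prefix of length $j$. For nonnegative integers $k_m,\dots,k_0$, $[k_m\cdots k_0]_F$ denotes $\sum_{i=0}^m k_iF_{i+2}$. A representation $N=[k_m\cdots k_0]_F$ with all $k_i\geq 0$ is valid if ${\bf f}(0..N]=f_m^{k_m}\cdots f_0^{k_0}$. $V(N)$ denotes the number of valid representations of $N$ (up to leading zeros), i.e. the number of factorizations of ${\bf f}(0..N]$ as a concatenation $f_m^{k_m}\cdots f_0^{k_0}$ of standard words $f_i$, $i\geq 0$, in non-strictly decreasing order of index; $V(0)=1$. *)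

(* Defs.v *)
From mathcomp Require Import all_boot all_order all_algebra.
From mathcomp Require Import reals.
Import GRing.Theory Num.Theory.

Set Implicit Arguments.
Unset Strict Implicit.
Unset Printing Implicit Defensive.

Definition la : bool := true.
Definition lb : bool := false.

Fixpoint fib (m : nat) : nat :=
  match m with
  | 0 => 0
  | 1 => 1
  | (m'.+1 as k).+1 => fib k + fib m'
  end.

(* sw k = f_{k-1}: sw 0 = f_{-1} = b, sw 1 = f_0 = a,
   sw (k+2) = sw (k+1) ++ sw k, i.e. f_{m+1} = f_m f_{m-1}. *)
Fixpoint sw (k : nat) : seq bool :=
  match k with
  | 0 => [:: lb]
  | 1 => [:: la]
  | (k'.+1 as j).+1 => sw j ++ sw k'
  end.

Definition fw (m : nat) : seq bool := sw m.+1.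

(* The Fibonacci infinite word, indexed from 1: f[j] is the j-th letter of
   any f_m long enough; f_j has length F_{j+2} >= j (for j >= 1), and every
   f_m is a prefix of f_{m+1}, so f[j] = letter j of f_j. *)
Definition fword (j : nat) : bool := nth la (fw j) j.-1.

Definition fprefix (j : nat) : seq bool := take j (fw j).

(* A representation is given little-endian as ks = [:: k_0; k_1; ...; k_m].
   rep_word_from i ks = f_{i+m'}^{k_{i+m'}} ... f_i^{k_i} for ks starting at
   index i. *)
Fixpoint rep_word_from (i : nat) (ks : seq nat) : seq bool :=
  match ks with
  | [::] => [::]
  | k :: ks' => rep_word_from i.+1 ks' ++ flatten (nseq k (fw i))
  end.

Definition rep_word (ks : seq nat) : seq bool := rep_word_from 0 ks.

Definition rep_val (ks : seq nat) : nat :=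
  \sum_(i < size ks) nth 0 ks i * fib i.+2.

Definition valid_rep (N : nat) (ks : seq nat) : bool :=
  (N == rep_val ks) && (fprefix N == rep_word ks).

(* Canonical form "up to leading zeros": the most significant digit k_m is
   nonzero (the empty list represents 0). *)
Definition canon_rep (ks : seq nat) : bool := last 1 ks != 0.

(* V_is N c  <->  V(N) = c : the valid representations of N (up to leading
   zeros) form a finite set of cardinality c. *)
Definition V_is (N : nat) (c : int) : Prop :=
  exists s : seq (seq nat),
    [/\ uniq s,
        forall ks, (ks \in s) = canon_rep ks && valid_rep N ks
      & Posz (size s) = c].

Definition count_b (n : nat) : nat := count (pred1 lb) (fprefix n).

Definition count_aa (n : nat) : nat :=
  count (fun i => (fword i == la) && (fword i.+1 == la)) (iota 1 n.-1).

Local Open Scope ring_scope.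

Definition phi (R : realType) : R := (1 + Num.sqrt 5) / 2.

Example fw_chk : fprefix 10 = [:: la; lb; la; la; lb; la; lb; la; la; lb].
Proof. by []. Qed.

(* Main.v *)
Require Import Defs.
From mathcomp Require Import all_boot all_order all_algebra.
From mathcomp Require Import reals.
From mathcomp Require Import zify ring lra.
Import GRing.Theory Num.Theory.
Set Implicit Arguments. Unset Strict Implicit. Unset Printing Implicit Defensive.


Definition sgm (w : seq bool) : seq bool :=
  flatten [seq (if c then [:: true; false] else [:: true]) | c <- w].

Lemma sig_cat u v : sgm (u ++ v) = sgm u ++ sgm v.
Proof. by rewrite /sgm map_cat flatten_cat. Qed.

Lemma sig_cons c u : sgm (c :: u) = (if c then [:: true; false] else [:: true]) ++ sgm u.
Proof. by []. Qed.

Lemma sig_rcons u c : sgm (rcons u c) = sgm u ++ (if c then [:: true; false] else [:: true]).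
Proof. by rewrite -cats1 sig_cat /sgm /= cats0. Qed.

Lemma sig_nil : sgm [::] = [::]. Proof. by []. Qed.

Lemma size_sig u : size (sgm u) = size u + count (pred1 true) u.
Proof. elim: u => //= c u IH; rewrite sig_cons size_cat IH; case: c => /=; lia. Qed.

Lemma countb_sig u : count (pred1 false) (sgm u) = count (pred1 true) u.
Proof. elim: u => //= c u IH; rewrite sig_cons count_cat IH; case: c => /=; lia. Qed.

Lemma sig_head u : sgm u = [::] \/ exists v, sgm u = true :: v.
Proof. case: u => [|c u]; [by left| right]; rewrite sig_cons; case: c; by eexists. Qed.

Lemma sig_inj : injective sgm.
Proof.
elim=> [|c u IH] [|d v] //.
- by rewrite sig_cons; case: d.
- by rewrite sig_cons; case: c.
rewrite !sig_cons; case: c; case: d => /=.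
- by case=> /IH ->.
- move=> E; by case: (sig_head v) E => [->|[x ->]].
- move=> E; by case: (sig_head u) E => [->|[x ->]].
- by case=> /IH ->.
Qed.

Lemma sig_no_bb u w : sgm u <> w ++ [:: false; false].
Proof.
case/lastP: u => [|u c]; first by case: w.
rewrite sig_rcons; case: c => E.
- have E2 : rcons (sgm u ++ [:: true]) false = rcons (w ++ [:: false]) false.
    by rewrite -!cats1 -!catA.
  case: (rcons_inj E2) => E3.
  have := congr1 (fun s => last true s) E3.
  by rewrite !last_cat.
- have := congr1 (fun s => last true s) E.
  by rewrite !last_cat.
Qed.

Lemma sig_no_b w : sgm w <> [:: false].
Proof. by case: (sig_head w) => [->|[x ->]]. Qed.

Lemma sw_sig2 k : sw k.+1 = sgm (sw k) /\ sw k.+2 = sgm (sw k.+1).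
Proof.
elim: k => [|k [IH1 IH2]]; first by split.
split => //.
have -> : sw k.+3 = sw k.+2 ++ sw k.+1 by [].
have -> : sw k.+2 = sw k.+1 ++ sw k by [].
by rewrite sig_cat -IH1 -IH2.
Qed.

Lemma sw_sig k : sw k.+1 = sgm (sw k).
Proof. by case: (sw_sig2 k). Qed.

Lemma fw_sig m : fw m.+1 = sgm (fw m).
Proof. exact: sw_sig. Qed.

Lemma fwS m : fw m.+1 = fw m ++ sw m.
Proof. by []. Qed.

Lemma size_sw2 k : size (sw k.+1) = fib k.+2 /\ size (sw k.+2) = fib k.+3.
Proof.
elim: k => [|k [IH1 IH2]]; first by split.
split => //.
have -> : sw k.+3 = sw k.+2 ++ sw k.+1 by [].
by rewrite size_cat IH1 IH2.
Qed.

Lemma size_sw k : size (sw k.+1) = fib k.+2.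
Proof. by case: (size_sw2 k). Qed.

Lemma size_fw m : size (fw m) = fib m.+2.
Proof. by rewrite /fw size_sw. Qed.

Lemma fib_ge2 m : m < fib m.+2 /\ m.+1 < fib m.+3.
Proof.
elim: m => [|m [IH1 IH2]]; first by split.
split => //.
have -> : fib m.+4 = fib m.+3 + fib m.+2 by [].
lia.
Qed.

Lemma size_fw_ge m : m < size (fw m).
Proof. by rewrite size_fw (fib_ge2 m).1. Qed.

Lemma fw_prefix m m' : m <= m' -> fw m = take (size (fw m)) (fw m').
Proof.
move=> H; elim: m' H => [|m' IH]; first by rewrite leqn0 => /eqP ->; rewrite take_size.
rewrite leq_eqVlt => /orP[/eqP->|H]; first by rewrite take_size.
have E := IH H.
have Hs : size (fw m) <= size (fw m').
  by rewrite {1}E size_take; case: ifP => // /ltnW.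
by rewrite fwS takel_cat // -E.
Qed.


Notation P := fprefix.
Notation x := fword.
Definition A N := count (pred1 true) (P N).
Definition B N := count (pred1 false) (P N).
Definition L M := size (sgm (P M)).

Lemma P_take N K : N <= size (fw K) -> take N (fw K) = P N.
Proof.
move=> H; rewrite /fprefix.
case: (leqP K N) => HK.
- by rewrite {1}(fw_prefix HK) take_takel.
- have HK' : N <= K by lia.
  rewrite (fw_prefix HK') take_takel //.
  have := size_fw_ge N; lia.
Qed.

Lemma size_P N : size (P N) = N.
Proof. by rewrite /fprefix size_takel //; have := size_fw_ge N; lia. Qed.

Lemma P0 : P 0 = [::]. Proof. by []. Qed.

Lemma P_S N : P N.+1 = rcons (P N) (x N.+1).
Proof.
rewrite {1}/fprefix (take_nth true); last by have := size_fw_ge N.+1; lia.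
rewrite P_take //; have := size_fw_ge N.+1; lia.
Qed.

Lemma x_last N : 0 < N -> last true (P N) = x N.
Proof. by case: N => // N _; rewrite P_S last_rcons. Qed.

Lemma x1 : x 1 = true. Proof. by []. Qed.
Lemma x2 : x 2 = false. Proof. by []. Qed.

Lemma A_S N : A N.+1 = A N + x N.+1.
Proof. by rewrite /A P_S -cats1 count_cat /=; case: (x N.+1). Qed.

Lemma B_S N : B N.+1 = B N + ~~ x N.+1.
Proof. by rewrite /B P_S -cats1 count_cat /=; case: (x N.+1). Qed.

Lemma AB N : A N + B N = N.
Proof.
elim: N => // N IH; rewrite A_S B_S; case: (x N.+1) => /=; lia.
Qed.

Lemma A_pos N : 0 < N -> 0 < A N.
Proof.
case: N => // N _; elim: N => // N IH.
rewrite A_S; lia.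
Qed.

Lemma sig_P M : sgm (P M) = P (L M).
Proof.
have E : fw M.+1 = sgm (P M) ++ sgm (drop M (fw M)).
  by rewrite fw_sig -sig_cat /fprefix cat_take_drop.
have H : size (sgm (P M)) <= size (fw M.+1) by rewrite E size_cat leq_addr.
by rewrite /L -(P_take H) E take_size_cat.
Qed.

Lemma L_def M : L M = M + A M.
Proof. by rewrite /L size_sig size_P. Qed.

Lemma L_S M : L M.+1 = L M + (if x M.+1 then 2 else 1).
Proof. rewrite !L_def A_S; case: (x M.+1) => /=; lia. Qed.

Lemma B_L M : B (L M) = A M.
Proof. by rewrite /B -sig_P countb_sig. Qed.

Lemma x_L M : 0 < M -> x (L M) = ~~ x M.
Proof.
case: M => // M _.
have H : 0 < L M.+1 by rewrite L_S; case: (x M.+1); lia.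
rewrite -(x_last H) -sig_P P_S sig_rcons last_cat.
by case: (x M.+1).
Qed.

Lemma P_Lm1 M : 0 < M -> x M -> P (L M).-1 = sgm (rcons (P M.-1) false).
Proof.
case: M => // M _ HM.
have H : 0 < L M.+1 by rewrite L_S; case: (x M.+1); lia.
have E : P (L M.+1) = rcons (P (L M.+1).-1) (x (L M.+1)).
  by rewrite -[in LHS](prednK H) P_S (prednK H).
move: E; rewrite -sig_P P_S HM sig_rcons /= sig_rcons /=.
have -> : sgm (P M) ++ [:: true; false] = rcons (sgm (P M) ++ [:: true]) false.
  by rewrite -cats1 -catA.
by move/rcons_inj => [<-].
Qed.

Lemma x_Lm1 M : 0 < M -> x M -> 1 < L M -> x (L M).-1 = true.
Proof.
move=> HM HxM H.
rewrite -x_last; last by lia.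
by rewrite P_Lm1 // sig_rcons last_cat.
Qed.

Lemma decode N : exists M, N = L M \/ (N.+1 = L M /\ x M /\ 0 < M).
Proof.
elim: N => [|N [M [E|[E [HM Hpos]]]]].
- by exists 0; left.
- case HxM : (x M.+1).
  + exists M.+1; right; rewrite L_S HxM; split => //; lia.
  + exists M.+1; left; rewrite L_S HxM; lia.
- by exists M; left.
Qed.

Lemma x0 : x 0 = true. Proof. by []. Qed.

Lemma b_from_L N : x N = false -> exists M, N = L M /\ x M /\ 0 < M.
Proof.
move=> HN; case: (decode N) => M [E|[E [HM Hpos]]].
- have HM0 : 0 < M.
    case: M E => // E; move: HN; rewrite E /L /= => //.
  exists M; split => //; split => //.
  by move: HN; rewrite E x_L // => /negbFE.
- have H1 : 1 < L M.
    have := A_pos Hpos; rewrite L_def in E *; lia.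
  have := x_Lm1 Hpos HM H1; rewrite -E /= HN //.
Qed.

Lemma no_bb N : x N = false -> 1 < N /\ x N.-1 = true /\ x N.+1 = true.
Proof.
move=> HN; case: (b_from_L HN) => M [E [HM Hpos]].
have H1 : 1 < L M by have := A_pos Hpos; rewrite L_def in E *; lia.
split; first by rewrite E.
split; first by rewrite E x_Lm1.
have := L_S M; case HM1 : (x M.+1) => E2.
- have H3 : x (L M.+1).-1 = true by apply: x_Lm1 => //; rewrite E2; lia.
  rewrite E2 in H3; rewrite E.
  by have -> : (L M).+1 = (L M + 2).-1 by lia.
- by rewrite E -(addn1 (L M)) -E2 x_L // HM1.
Qed.


Definition Cnt (w : seq bool) (c : nat) : Prop :=
  exists s : seq (seq nat),
    [/\ uniq s, forall ks, (ks \in s) = canon_rep ks && (rep_word ks == w) & size s = c].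
Definition SigSpec (w : seq bool) (c : nat) : Prop :=
  exists s : seq (seq nat),
    [/\ uniq s, forall ks, (ks \in s) = canon_rep ks && (sgm (rep_word ks) == w) & size s = c].
Definition RcSpec (w : seq bool) (c : nat) : Prop :=
  exists s : seq (seq nat),
    [/\ uniq s, forall ks, (ks \in s) = canon_rep ks && (rcons (rep_word ks) true == w) & size s = c].

Lemma sig_flatten_nseq k w : sgm (flatten (nseq k w)) = flatten (nseq k (sgm w)).
Proof. by elim: k => //= k IH; rewrite sig_cat IH. Qed.

Lemma size_flatten_nseq k (w : seq bool) : size (flatten (nseq k w)) = k * size w.
Proof. elim: k => //= k IH; rewrite size_cat IH; lia. Qed.

Lemma flatten_nseq1 k : flatten (nseq k [:: true]) = nseq k true.
Proof. by elim: k => //= k ->. Qed.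

Lemma nseqSr k (c : bool) : nseq k.+1 c = rcons (nseq k c) c.
Proof. by elim: k => //= k ->. Qed.

Lemma rep_word_from_S i ks : rep_word_from i.+1 ks = sgm (rep_word_from i ks).
Proof.
elim: ks i => //= k ks IH i.
by rewrite IH sig_cat fw_sig sig_flatten_nseq.
Qed.

Lemma rep_word_cons k t : rep_word (k :: t) = sgm (rep_word t) ++ nseq k true.
Proof. by rewrite /rep_word /= rep_word_from_S flatten_nseq1. Qed.

Lemma size_rep_word_from i ks :
  size (rep_word_from i ks) = \sum_(j < size ks) nth 0 ks j * fib (i + j).+2.
Proof.
elim: ks i => [|k ks IH] i; first by rewrite big_ord0.
rewrite /= size_cat IH size_flatten_nseq size_fw big_ord_recl /= addn0 addnC.
congr (_ + _); apply: eq_bigr => j _; by rewrite /= ?addnS ?addSn.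
Qed.

Lemma size_rep_word ks : size (rep_word ks) = rep_val ks.
Proof. by rewrite /rep_word size_rep_word_from. Qed.

Lemma canon_cons k t : canon_rep (k :: t) = if t is [::] then k != 0 else canon_rep t.
Proof. by case: t. Qed.

Lemma sig_nil_inv w : sgm w = [::] -> w = [::].
Proof. by case: w => // c w; rewrite sig_cons; case: c. Qed.

Lemma rep_word_nil ks : canon_rep ks -> rep_word ks = [::] -> ks = [::].
Proof.
elim: ks => // k t IH; rewrite canon_cons rep_word_cons => Hc.
move=> H; have := congr1 size H; rewrite size_cat size_nseq /= => Hs.
have Hk : k = 0 by lia.
have Ht : rep_word t = [::].
  apply: sig_nil_inv; apply/eqP; rewrite -size_eq0; apply/eqP.
  by rewrite Hk addn0 in Hs.
clear H Hs; case: t IH Hc Ht => [|k' t'] IH Hc Ht; first by rewrite Hk in Hc.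
by have := IH Hc Ht.
Qed.

Lemma Cnt_nil : Cnt [::] 1.
Proof.
exists [:: [::]]; split => // ks; rewrite inE.
case: ks => [|k t] //=.
apply/esym/negbTE; apply/negP => /andP[Hc /eqP H].
by have := rep_word_nil Hc H.
Qed.

Definition inc (ks : seq nat) := if ks is k :: t then k.+1 :: t else [:: 1].

Definition dec (ks : seq nat) :=
  if ks is k.+1 :: t then (if (k == 0) && (t == [::]) then [::] else k :: t) else ks.

Lemma inc_dec k t : inc (dec (k.+1 :: t)) = k.+1 :: t.
Proof. by rewrite /=; case: k => [|k] //=; case: t. Qed.

Lemma dec_inc u : canon_rep u -> dec (inc u) = u.
Proof. by case: u => [|[|k] [|k' t']] //=. Qed.

Lemma inc_inj_in (s : seq (seq nat)) : {in s, forall u, canon_rep u} -> {in s &, injective inc}.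
Proof. by move=> H u v Hu Hv E; rewrite -(dec_inc (H u Hu)) -(dec_inc (H v Hv)) E. Qed.

Lemma cons0_inj : injective (cons 0 : seq nat -> seq nat).
Proof. by move=> a b [].
Qed.

Lemma Cnt_rec w c1 c2 : w != [::] -> SigSpec w c1 -> RcSpec w c2 -> Cnt w (c1 + c2).
Proof.
move=> Hw [s1 [U1 M1 S1]] [s2 [U2 M2 S2]].
have C2 : {in s2, forall u, canon_rep u} by move=> u; rewrite M2 => /andP[].
exists (map (cons 0) s1 ++ map inc s2); split.
- rewrite cat_uniq (map_inj_in_uniq (inc_inj_in C2)) U2 (map_inj_uniq cons0_inj) U1 /=.
  rewrite andbT.
  apply/hasPn => u /mapP [v _ ->]; apply/mapP => [[y _]].
  by case: v.
- move=> ks; rewrite mem_cat.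
  case: ks => [|k t].
  + have -> : ([::] \in map (cons 0) s1) = false by apply/negbTE/negP => /mapP [v _].
    have -> : ([::] \in map inc s2) = false by apply/negbTE/negP => /mapP [[|v t] _].
    have Hn : rep_word [::] = [::] by [].
    by rewrite Hn eq_sym (negbTE Hw) andbF.
  + case: k => [|k].
    * have -> : (0 :: t \in map inc s2) = false.
        by apply/negbTE/negP => /mapP [v _]; case: v.
      rewrite orbF (mem_map cons0_inj).
      rewrite M1 rep_word_cons cats0 canon_cons.
      case: t => [|k' t'] //.
      have Hn : sgm (rep_word [::]) = [::] by [].
      by rewrite Hn eq_sym (negbTE Hw) !andbF.
    * have -> : (k.+1 :: t \in map (cons 0) s1) = false.
        by apply/negbTE/negP => /mapP [v _].
      have -> : (k.+1 :: t \in map inc s2) = (dec (k.+1 :: t) \in s2).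
        apply/mapP/idP => [[u Hu ->]|H]; first by rewrite dec_inc // C2.
        by exists (dec (k.+1 :: t)) => //; rewrite inc_dec.
      rewrite M2 /= rep_word_cons nseqSr -rcons_cat.
      case: k => [|k] /=.
      - case: t => [|k' t'] //=.
        by rewrite rep_word_cons.
      - by rewrite rep_word_cons !canon_cons; case: t.
- by rewrite size_cat !size_map S1 S2.
Qed.

Lemma SigSpec_of y c : Cnt y c -> SigSpec (sgm y) c.
Proof.
move=> [s [U M S]]; exists s; split => // ks.
by rewrite M (inj_eq sig_inj).
Qed.

Lemma SigSpec0 w : (forall y, sgm y <> w) -> SigSpec w 0.
Proof.
move=> H; exists [::]; split => // ks.
by apply/esym/negbTE; rewrite negb_and; apply/orP; right; apply/eqP/H.
Qed.

Lemma RcSpec_of w c : Cnt w c -> RcSpec (rcons w true) c.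
Proof.
move=> [s [U M S]]; exists s; split => // ks.
by rewrite M eqseq_rcons eqxx andbT.
Qed.

Lemma RcSpec0 w : (forall u, rcons u true <> w) -> RcSpec w 0.
Proof.
move=> H; exists [::]; split => // ks.
by apply/esym/negbTE; rewrite negb_and; apply/orP; right; apply/eqP/H.
Qed.

Lemma Cnt_bb u : Cnt (u ++ [:: false; false]) 0.
Proof.
have -> : 0 = 0 + 0 by [].
apply: Cnt_rec.
- by case: u.
- by apply: SigSpec0 => y /sig_no_bb.
- apply: RcSpec0 => v E.
  have := congr1 (last true) E; rewrite last_rcons last_cat //.
Qed.

Lemma V_is_of N c : Cnt (fprefix N) c -> V_is N (Posz c).
Proof.
move=> [s [U M S]]; exists s; split => //; last by rewrite S.
move=> ks; rewrite M /valid_rep; congr (_ && _).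
apply/idP/idP.
- by move=> /eqP E; rewrite E eqxx andbT -size_rep_word E size_P eqxx.
- by move=> /andP[_ /eqP ->].
Qed.


Definition Q N := rcons (P N.-1) (~~ x N).

Definition HP N c := [/\ N = 0 -> c = 1, 0 < N -> x N -> c = B N + 1
  & 0 < N -> x N = false -> c + 2 * B N = N + 1].
Definition HQ N c := [/\ x N -> x N.-1 -> 1 < N -> c + 2 * B N = N.-1,
  x N -> (x N.-1 = false \/ N <= 1) -> c = 0 & x N = false -> c = B N].
Definition SP N := exists c, Cnt (P N) c /\ HP N c.
Definition SQ N := exists c, Cnt (Q N) c /\ HQ N c.

Lemma L_gt M : 0 < M -> M < L M.
Proof. by move=> H; rewrite L_def; have := A_pos H; lia. Qed.

Lemma P_SS N : 0 < N -> P N = rcons (P N.-1) (x N).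
Proof. by case: N => // N _; rewrite P_S. Qed.

Lemma B_pred N : 0 < N -> B N = B N.-1 + ~~ x N.
Proof. by case: N => // N _; rewrite B_S. Qed.

Lemma A_pred N : 0 < N -> A N = A N.-1 + x N.
Proof. by case: N => // N _; rewrite A_S. Qed.

Lemma L_pred M : 0 < M -> L M = L M.-1 + (if x M then 2 else 1).
Proof. by case: M => // M _; rewrite L_S. Qed.

Lemma stepQ N : 0 < N -> (forall M, M < N -> SP M /\ (0 < M -> SQ M)) -> SQ N.
Proof.
move=> HN IH.
case HxN : (x N).
-
  have EQ : Q N = rcons (P N.-1) false by rewrite /Q HxN.
  have R0 : RcSpec (Q N) 0.
    apply: RcSpec0 => u; rewrite EQ => /rcons_inj [_ //].
  case: (decode N.-1) => M [E|[E [HM HMp]]].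
  + case: (posnP M) => [HM0|HMp].
    *
      have HN1 : N = 1 by move: E; rewrite HM0 /L /=; lia.
      have S0 : SigSpec (Q N) 0.
        by apply: SigSpec0 => y; rewrite EQ HN1 /=; apply: sig_no_b.
      exists 0; split; first by apply: (Cnt_rec (c1:=0) (c2:=0)) => //; rewrite EQ; case: (P _).
      by split => //; rewrite HN1.
    * case HxM : (x M).
      -- (* x (N-1) = false ; Q N ends with bb *)
         have HxN1 : x N.-1 = false by rewrite E x_L // HxM.
         have S0 : SigSpec (Q N) 0.
           apply: SigSpec0 => y.
           rewrite EQ E -sig_P (P_SS HMp) HxM sig_rcons /=.
           have -> : rcons (sgm (P M.-1) ++ [:: true; false]) false
                   = (sgm (P M.-1) ++ [:: true]) ++ [:: false; false].
             by rewrite -cats1 -!catA.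
           exact: sig_no_bb.
         exists 0; split; first by apply: (Cnt_rec (c1:=0) (c2:=0)) => //; rewrite EQ; case: (P _).
         by split; rewrite ?HxN1 ?HxN.
      --
         have HMN : M < N by have := L_gt HMp; lia.
         have [_ HQM] := IH M HMN.
         have [c [Cc [_ _ Hc3]]] := HQM HMp.
         have EQ2 : Q N = sgm (Q M).
           rewrite EQ E -sig_P (P_SS HMp) HxM /Q HxM /= !sig_rcons /=.
           by rewrite -cats1 -catA.
         have S1 : SigSpec (Q N) c by rewrite EQ2; apply: SigSpec_of.
         exists (c + 0); split; first by apply: Cnt_rec => //; rewrite EQ; case: (P _).
         have HxN1 : x N.-1 = true by rewrite E x_L // HxM.
         have E1 := Hc3 HxM.
         have E2 := B_pred HN; rewrite HxN /= addn0 in E2.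
         have E3 := B_L M. have E4 := L_def M. have E5 := AB M.
         split => //.
         ++ move=> _ _ _; rewrite E2 E; lia.
         ++ by move=> _ [|]; [rewrite HxN1 | lia].
         ++ by rewrite HxN.
  +
    have EN : N = L M by lia.
    have : x N = false by rewrite EN x_L // HM.
    by rewrite HxN.
-
  have [N2 [HxNm1 HxNp1]] := no_bb HxN.
  have EQ : Q N = rcons (P N.-1) true by rewrite /Q HxN.
  have HN1 : N.-1 < N by lia.
  have [[c [Cc [_ Hc2 _]]] _] := IH N.-1 HN1.
  have R1 : RcSpec (Q N) c by rewrite EQ; apply: RcSpec_of.
  have [M [E [HxM HMp]]] := b_from_L HxN.
  have S0 : SigSpec (Q N) 0.
    have -> : Q N = sgm (P M.-1 ++ [:: false; false]).
      by rewrite EQ E P_Lm1 // !sig_rcons sig_cat -cats1 -catA.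
    by apply: SigSpec_of; apply: Cnt_bb.
  exists (0 + c); split; first by apply: Cnt_rec => //; rewrite EQ; case: (P _).
  have E1 := Hc2 ltac:(lia) HxNm1.
  have E2 := B_pred HN; rewrite HxN /= in E2.
  split => //; rewrite HxN // => _; lia.
Qed.

Lemma B1 : B 1 = 0. Proof. by []. Qed.

Lemma HP_intro N c : 0 < N -> (x N -> c = B N + 1) ->
  (x N = false -> c + 2 * B N = N + 1) -> HP N c.
Proof. by move=> HN H1 H2; split => // E; move: HN; rewrite E. Qed.

Lemma stepP N : (forall M, M < N -> SP M /\ (0 < M -> SQ M)) -> (0 < N -> SQ N) -> SP N.
Proof.
move=> IH HQN.
case: (posnP N) => [->|HN].
  by exists 1; split; [apply: Cnt_nil | split].
have QA : forall M, M <= N -> 0 < M -> SQ M.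
  move=> M; rewrite leq_eqVlt => /orP[/eqP ->|H]; [exact: HQN| exact: (IH M H).2].
have HN1 : N.-1 < N by lia.
have [[c2 [Cc2 [Hc20 Hc21 Hc22]]] _] := IH N.-1 HN1.
have EB := B_pred HN. have EA := A_pred HN.
case HxN : (x N).
- have R : RcSpec (P N) c2 by rewrite (P_SS HN) HxN; apply: RcSpec_of.
  case: (decode N) => M [E|[E [HM HMp]]].
  + case: (posnP M) => [HM0|HMp]; first by move: E HN; rewrite HM0 /L /= => ->.
    have HxM : x M = false by move: HxN; rewrite E x_L // => /negPf.
    have HMN : M < N by rewrite E; apply: L_gt.
    have [[c1 [Cc1 [_ _ Hc12]]] _] := IH M HMN.
    have S : SigSpec (P N) c1 by rewrite E -sig_P; apply: SigSpec_of.
    exists (c1 + c2); split; first by apply: Cnt_rec => //; rewrite (P_SS HN); case: (P _).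
    have [M2 [HxM1 _]] := no_bb HxM.
    have HM1p : 0 < M.-1 by lia.
    have EL := L_pred HMp; rewrite HxM in EL.
    have HxN1 : x N.-1 = false by rewrite E EL addn1 /= x_L // HxM1.
    have E1 := Hc12 HMp HxM.
    have E2 := Hc22 ltac:(lia) HxN1.
    have E3 : N.-1 = L M.-1 by rewrite E EL addn1.
    have E4 := B_L M.-1. have E5 := B_L M. have E6 := L_def M.-1.
    have E7 := AB M.-1. have E8 := AB M.
    have E9 := B_pred HMp. have E10 := A_pred HMp. rewrite HxM /= in E9 E10.
    apply: HP_intro => //; last by rewrite HxN.
    move=> _.
    rewrite E in EB EA E2 *.
    rewrite -E3 in E4.
    rewrite E5; lia.
  + have HxM1 : 1 < L M by have := L_gt HMp; lia.
    have EQM : P N = sgm (Q M).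
      have -> : N = (L M).-1 by lia.
      by rewrite P_Lm1 // /Q HM.
    have [c1 [Cc1 [Hc11 Hc12 _]]] := QA M ltac:(have := L_gt HMp; lia) HMp.
    have S : SigSpec (P N) c1 by rewrite EQM; apply: SigSpec_of.
    exists (c1 + c2); split; first by apply: Cnt_rec => //; rewrite (P_SS HN); case: (P _).
    apply: HP_intro => //; last by rewrite HxN.
    move=> _.
    case: (ltnP 1 M) => HM2.
    * have EL := L_pred HMp; rewrite HM in EL.
      have HM1p : 0 < M.-1 by lia.
      have E3 : N.-1 = L M.-1 by lia.
      have E4 := B_L M.-1. have E6 := L_def M.-1. have E7 := AB M.-1.
      have E9 := B_pred HMp. rewrite HM /= in E9.
      case HxM1' : (x M.-1).
      -- have HxN1 : x N.-1 = false by rewrite E3 x_L // HxM1'.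
         have E1 := Hc11 HM HxM1' HM2.
         have E2 := Hc22 ltac:(lia) HxN1.
         rewrite -E3 in E4.
         rewrite HxN /= in EB. lia.
      -- have HxN1 : x N.-1 = true by rewrite E3 x_L // HxM1'.
         have E1 := Hc12 HM (or_introl HxM1').
         have E2 := Hc21 ltac:(lia) HxN1.
         rewrite HxN /= in EB. lia.
    * have HM1 : M = 1 by lia.
      have HN1' : N = 1 by move: E; rewrite HM1 /L /=; lia.
      have E1 := Hc12 HM (or_intror HM2).
      have E2 := Hc20; rewrite HN1' /= in E2.
      rewrite HN1' B1 E1 E2 //.
- have R : RcSpec (P N) 0.
    by apply: RcSpec0 => u; rewrite (P_SS HN) HxN => /rcons_inj [_ //].
  have [M [E [HxM HMp]]] := b_from_L HxN.
  have HMN : M < N by rewrite E; apply: L_gt.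
  have [[c1 [Cc1 [_ Hc11 _]]] _] := IH M HMN.
  have S : SigSpec (P N) c1 by rewrite E -sig_P; apply: SigSpec_of.
  exists (c1 + 0); split; first by apply: Cnt_rec => //; rewrite (P_SS HN); case: (P _).
  have E1 := Hc11 HMp HxM.
  have E4 := B_L M. have E6 := L_def M. have E7 := AB M.
  apply: HP_intro => //; first by rewrite HxN.
  move=> _; rewrite E E4; lia.
Qed.

Lemma main N : SP N /\ (0 < N -> SQ N).
Proof.
suff H : forall K N, N < K -> SP N /\ (0 < N -> SQ N) by apply: (H N.+1).
elim=> // K IHK {}N HN.
have IH : forall M, M < N -> SP M /\ (0 < M -> SQ M) by move=> M HM; apply: IHK; lia.
have HQ : 0 < N -> SQ N by move=> H; apply: stepQ.
by split => //; apply: stepP.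
Qed.


Lemma AA_eq m : (count_aa m.+1 + 2 * B m.+1 + x m.+1 = m.+1)%N.
Proof.
elim: m => [|m IH]; first by [].
have Ei : iota 1 m.+1 = iota 1 m ++ [:: m.+1] by have := iotaD 1 m 1; rewrite addn1 add1n.
move: IH; rewrite /count_aa.
change (iota 1 m.+2.-1) with (iota 1 m.+1); change (iota 1 m.+1.-1) with (iota 1 m).
rewrite Ei count_cat /= (B_S m.+1) /la.
case Hx : (x m.+2); case Hx1 : (x m.+1) => /=; try lia.
by have [_ [H1 _]] := no_bb Hx; rewrite /= Hx1 in H1.
Qed.

Local Open Scope ring_scope.

Section Real.
Variable R : realType.
Variable t : R.
Hypothesis ht2 : t ^+ 2 = 3 * t - 1.
Hypothesis ht0 : 0 < t.
Hypothesis ht1 : t < 1 / 2.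

Lemma stA (m b : R) : (m + 1) * t - 1 < b -> m - b < (2 * m - b + 1) * t.
Proof.
move=> h; have h0 := ht0; have h2 := ht1.
have h1 : ((m + 1) * t - 1) * (1 - t) < b * (1 - t) by rewrite ltr_pM2r // subr_gt0; lra.
have E : ((m + 1) * t - 1) * (1 - t) = m - 2 * m * t - t - (m + 1) * (t ^+ 2 - (3 * t - 1)) by ring.
rewrite ht2 subrr mulr0 subr0 in E.
rewrite E in h1; lra.
Qed.

Lemma stB (m b : R) : b < (m + 1) * t -> (2 * m - b + 1) * t < m - b + 1.
Proof.
move=> h; have h0 := ht0; have h2 := ht1.
have h1 : b * (1 - t) < (m + 1) * t * (1 - t) by rewrite ltr_pM2r // subr_gt0; lra.
have E : (m + 1) * t * (1 - t) = (m + 1) * (1 - 2 * t) - (m + 1) * (t ^+ 2 - (3 * t - 1)) by ring.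
rewrite ht2 subrr mulr0 subr0 in E.
rewrite E in h1; lra.
Qed.

Lemma stC (m b : R) : b < m * t -> (2 * m - b) * t < m - b.
Proof.
move=> h; have h0 := ht0; have h2 := ht1.
have h1 : b * (1 - t) < m * t * (1 - t) by rewrite ltr_pM2r // subr_gt0; lra.
have E : m * t * (1 - t) = m * (1 - 2 * t) - m * (t ^+ 2 - (3 * t - 1)) by ring.
rewrite ht2 subrr mulr0 subr0 in E.
rewrite E in h1; lra.
Qed.

Definition Inv n := (B n)%:R < (n.+1)%:R * t < (B n)%:R + 1.

Lemma natR (a b : nat) : (a = b)%N -> (a%:R : R) = b%:R.
Proof. by move=> ->. Qed.

Lemma sturm n : Inv n.
Proof.
have h0 := ht0; have h2 := ht1.
suff H : forall K n, (n < K)%N -> Inv n by apply: (H n.+1).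
elim=> // K IHK {}n Hn.
have IH : forall M, (M < n)%N -> Inv M by move=> M HM; apply: IHK; lia.
case: (decode n) => M [E|[E [HM HMp]]].
- case: (posnP M) => [HM0|HMp].
    rewrite /Inv E HM0 /L /= /B /=; apply/andP; split; lra.
  have HMn : (M < n)%N by rewrite E; apply: L_gt.
  have /andP[I1 I2] := IH M HMn.
  have E1 := B_L M. have E2 := L_def M. have E3 := AB M.
  have R1 : (B n + B M)%:R = M%:R :> R by apply: natR; rewrite E E1; lia.
  have R2 : (n.+1 + B M)%:R = (2 * M + 1)%:R :> R by apply: natR; rewrite E E2; lia.
  rewrite natrD in R1. rewrite !natrD in R2.
  rewrite -natr1 in I1 I2.
  have A1 := stA (m := M%:R) (b := (B M)%:R) ltac:(lra).
  have A2 := stB (m := M%:R) (b := (B M)%:R) ltac:(lra).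
  rewrite /Inv.
  have -> : (B n)%:R = M%:R - (B M)%:R :> R by lra.
  have -> : (n.+1)%:R = 2 * M%:R - (B M)%:R + 1 :> R by lra.
  apply/andP; split; lra.
- case: (ltnP 1 M) => HM2; last first.
    have HM1 : M = 1%N by lia.
    have Hn1 : n = 1%N by move: E; rewrite HM1 /L /=; lia.
    rewrite /Inv Hn1 /B /=; apply/andP; split; lra.
  have HMn : (M < n)%N.
    have := A_pred HMp; rewrite HM /=; have := @A_pos M.-1 ltac:(lia); rewrite L_def in E; lia.
  have HM1n : (M.-1 < n)%N by lia.
  have /andP[I1 I2] := IH M HMn.
  have /andP[J1 J2] := IH M.-1 HM1n.
  have HL : (0 < L M)%N by lia.
  have E1 := B_L M. have E2 := L_def M. have E3 := AB M.
  have E4 := B_pred HL. rewrite x_L // HM /= -E /= in E4.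
  have E5 := B_pred HMp. rewrite HM /= addn0 in E5.
  rewrite -E in E1 E2.
  have R1 : (B n + 1 + B M)%:R = M%:R :> R by apply: natR; lia.
  have R2 : (n.+1 + B M)%:R = (M + M)%:R :> R by apply: natR; lia.
  rewrite !natrD in R1 R2.
  rewrite -natr1 in I1 I2.
  have EM : M.-1.+1 = M by lia.
  rewrite EM -E5 in J1.
  have A1 := stA (m := M%:R) (b := (B M)%:R) ltac:(lra).
  have C1 := stC (m := M%:R) (b := (B M)%:R) J1.
  rewrite /Inv.
  have -> : (B n)%:R = M%:R - (B M)%:R - 1 :> R by lra.
  have -> : (n.+1)%:R = 2 * M%:R - (B M)%:R :> R by lra.
  apply/andP; split; lra.
Qed.

End Real.

Lemma ceil_nat (R : realType) (y : R) (k : nat) : k%:R - 1 < y -> y <= k%:R -> Num.ceil y = Posz k.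
Proof.
move=> h1 h2; apply: ceil_def.
rewrite rmorphB /= rmorph1 /=.
rewrite -[(Posz k)%:~R]/(k%:R).
by rewrite h1 h2.
Qed.

Lemma s5 (R : realType) : Num.sqrt (5 : R) ^+ 2 = 5.
Proof. by rewrite sqr_sqrtr // ler0n. Qed.

Unset Implicit Arguments.

Theorem theorem1 (R : realType) (n : nat) :
  (1 <= n)%N ->
  (fword n = la ->
     V_is n (Num.ceil (n%:R / phi R ^+ 2)) /\ V_is n (Posz (count_b n).+1)) /\
  (fword n = lb ->
     V_is n (Num.ceil (n%:R / phi R ^+ 3)) /\ V_is n (Posz (count_aa n).+1)).
Proof.
move=> Hn.
set s := Num.sqrt (5 : R).
have hs2 : s ^+ 2 = 5 by apply: s5.
have hs0 : 0 <= s by apply: sqrtr_ge0.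
have hs3 : s < 3 by nra.
have hs2' : 2 < s by nra.
have Ephi : phi R = (1 + s) / 2 by [].
set t := (phi R ^+ 2)^-1.
have Et : t = (3 - s) / 2.
  have E : phi R ^+ 2 * ((3 - s) / 2) = 1.
    rewrite Ephi.
    have -> : ((1 + s) / 2) ^+ 2 * ((3 - s) / 2) = (3 + 5 * s + s ^+ 2 - s ^+ 3) / 8 by field.
    have -> : s ^+ 3 = s * s ^+ 2 by rewrite exprS.
    by rewrite hs2; field.
  have Hp : phi R ^+ 2 != 0.
    apply/eqP => H; rewrite H mul0r in E.
    by move/eqP: E; rewrite eq_sym oner_eq0.
  by rewrite /t -[RHS](mulKf Hp) E mulr1.
have ht2 : t ^+ 2 = 3 * t - 1.
  rewrite Et.
  have -> : ((3 - s) / 2) ^+ 2 = (9 - 6 * s + s ^+ 2) / 4 by field.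
  by rewrite hs2; field.
have ht0 : 0 < t by rewrite Et; lra.
have ht1 : t < 1 / 2 by rewrite Et; lra.
have E3 : (phi R ^+ 3)^-1 = 1 - 2 * t.
  have E : phi R ^+ 3 * (1 - 2 * t) = 1.
    rewrite Et Ephi.
    have -> : ((1 + s) / 2) ^+ 3 * (1 - 2 * ((3 - s) / 2)) =
       (s ^+ 2 * s ^+ 2 + s * s ^+ 2 - 3 * s ^+ 2 - 5 * s - 2) / 8 by field.
    by rewrite hs2; field.
  have Hp : phi R ^+ 3 != 0.
    apply/eqP => H; rewrite H mul0r in E.
    by move/eqP: E; rewrite eq_sym oner_eq0.
  by rewrite -[RHS](mulKf Hp) E mulr1.
have [[c [Cc [_ Hc1 Hc2]]] _] := main n.
have Vc := V_is_of Cc.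
have I0 := sturm ht2 ht0 ht1 n.
have I1 := sturm ht2 ht0 ht1 n.-1.
have EB := B_pred Hn.
rewrite /Inv in I0 I1.
have En : n.-1.+1 = n by lia.
rewrite En in I1.
split => Hx.
- have Ec := Hc1 Hn Hx.
  rewrite Hx /= addn0 in EB.
  have Ecb : count_b n = B n by [].
  have Ec2 : (count_b n).+1 = c by rewrite Ec addn1.
  rewrite Ec2; split => //.
  rewrite (ceil_nat (k := c)) // Ec natrD EB; move/andP: I1 => [I1a I1b]; lra.
- have Ec := Hc2 Hn Hx.
  rewrite Hx /= in EB.
  have EA := AA_eq n.-1; rewrite En Hx addn0 in EA.
  have Ec' : c = (count_aa n).+1 by lia.
  rewrite -Ec'; split => //.
  have -> : n%:R / phi R ^+ 3 = n%:R * (1 - 2 * t) by rewrite /= E3.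
  have R1 : (c + 2 * B n)%:R = (n + 1)%:R :> R by rewrite Ec.
  have R2 : (B n)%:R = (B n.-1)%:R + 1 :> R by rewrite EB natrD.
  rewrite !natrD in R1.
  move/andP: I0 => [I0a I0b]; move/andP: I1 => [I1a I1b].
  rewrite -natr1 in I0a I0b.
  rewrite (ceil_nat (k := c)) //; lra.
Qed.
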